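(* Let $\Gamma\subseteq\mathbb R^n$ be an open convex set, $S\subseteq\Gamma$ a nonempty convex set, and $f:\Gamma\to\mathbb R$ a continuously differentiable function that is quasiconvex on $\Gamma$. Let $\bar S=\arg\min\{f(x)\mid x\in S\}$ be nonempty. Then exactly one of the following alternatives holds: (I) $\nabla f(x)\ne 0$ for all $x\in\bar S$, and the normalized gradient $\nabla f(x)/\|\nabla f(x)\|$ is constant over $\bar S$; (II) $\nabla f(x)=0$ for all $x\in\bar S$.
   Context: A function $f:\Gamma\to\mathbb R$ on a convex set $\Gamma\subseteq\mathbb R^n$ is quasiconvex on $\Gamma$ iff $f(x+t(y-x))\le\max\{f(x),f(y)\}$ for all $x,y\in\Gamma$ and $t\in[0,1]$. *)

(* Defs.v *)
From Stdlib Require Import Reals.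
From mathcomp Require Import ssreflect ssrfun ssrbool eqtype ssrnat seq fintype bigop.
Set Implicit Arguments. Unset Strict Implicit. Unset Printing Implicit Defensive.
Open Scope R_scope.

Definition vec (n : nat) := 'I_n -> R.

Definition vzero {n} : vec n := fun _ => 0.
Definition vadd {n} (x y : vec n) : vec n := fun i => x i + y i.
Definition vsub {n} (x y : vec n) : vec n := fun i => x i - y i.
Definition vscale {n} (t : R) (x : vec n) : vec n := fun i => t * x i.
Definition dot {n} (x y : vec n) : R := \big[Rplus/0]_(i < n) (x i * y i).
Definition vnorm {n} (x : vec n) : R := sqrt (dot x x).

Definition is_open {n} (G : vec n -> Prop) : Prop :=
  forall x, G x -> exists eps, 0 < eps /\ forall y, vnorm (vsub y x) < eps -> G y.

Definition is_convex {n} (G : vec n -> Prop) : Prop :=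
  forall x y t, G x -> G y -> 0 <= t <= 1 -> G (vadd x (vscale t (vsub y x))).

Definition quasiconvex_on {n} (G : vec n -> Prop) (f : vec n -> R) : Prop :=
  forall x y t, G x -> G y -> 0 <= t <= 1 ->
    f (vadd x (vscale t (vsub y x))) <= Rmax (f x) (f y).

Definition has_gradient {n} (f : vec n -> R) (x g : vec n) : Prop :=
  forall eps, 0 < eps -> exists delta, 0 < delta /\
    forall h, vnorm h < delta ->
      Rabs (f (vadd x h) - f x - dot g h) <= eps * vnorm h.

Definition continuous_on_vec {n} (G : vec n -> Prop) (F : vec n -> vec n) : Prop :=
  forall x, G x -> forall eps, 0 < eps -> exists delta, 0 < delta /\
    forall y, G y -> vnorm (vsub y x) < delta -> vnorm (vsub (F y) (F x)) < eps.

Definition C1_on_with_grad {n} (G : vec n -> Prop) (f : vec n -> R) (grad : vec n -> vec n) : Prop :=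
  (forall x, G x -> has_gradient f x (grad x)) /\ continuous_on_vec G grad.

Definition argmin_on {n} (S : vec n -> Prop) (f : vec n -> R) : vec n -> Prop :=
  fun x => S x /\ forall y, S y -> f x <= f y.

(* Main.v *)
Require Import Defs.
From Stdlib Require Import Reals.
From mathcomp Require Import ssreflect ssrfun ssrbool eqtype ssrnat seq fintype bigop.
From HB Require Import structures.
From Stdlib Require Import Lra FunctionalExtensionality Classical.
Open Scope R_scope.
Set Implicit Arguments.

HB.instance Definition _ := Monoid.isComLaw.Build R 0 Rplus
  (fun a b c => esym (Rplus_assoc a b c)) Rplus_comm Rplus_0_l.

Lemma sum_add n (F G : 'I_n -> R) : \big[Rplus/0]_(i<n) (F i + G i) =
  \big[Rplus/0]_(i<n) F i + \big[Rplus/0]_(i<n) G i.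
Proof. by rewrite big_split. Qed.

Lemma sum_scal n c (F : 'I_n -> R) : \big[Rplus/0]_(i<n) (c * F i) =
  c * \big[Rplus/0]_(i<n) F i.
Proof.
apply: (big_rec2 (fun a b => a = c * b)) => [|i y1 y2 _ ->]; ring.
Qed.

Lemma sum_nonneg n (F : 'I_n -> R) : (forall i, 0 <= F i) -> 0 <= \big[Rplus/0]_(i<n) F i.
Proof.
move=> H; apply: (big_ind (fun a => 0 <= a)) => //; [lra| move=> a b; lra].
Qed.

Lemma sum_eq0 n (F : 'I_n -> R) : (forall i, 0 <= F i) -> \big[Rplus/0]_(i<n) F i = 0 ->
  forall i, F i = 0.
Proof.
move=> H Hs i; move: Hs; rewrite (bigD1 i) // => C.
have C' : F i + \big[Rplus/0]_(j < n | true && (j != i)) F j = 0 := C.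
have : 0 <= \big[Rplus/0]_(j < n | true && (j != i)) F j.
  apply: (big_ind (fun a => 0 <= a)) => //; [lra| move=> a b; lra].
have := H i; lra.
Qed.

Lemma dot_comm n (x y : vec n) : dot x y = dot y x.
Proof. rewrite /dot; apply: eq_bigr => i _; ring. Qed.

Lemma dot_addl n (x y z : vec n) : dot (vadd x y) z = dot x z + dot y z.
Proof. rewrite /dot -sum_add; apply: eq_bigr => i _; rewrite /vadd; ring. Qed.

Lemma dot_scalel n t (x y : vec n) : dot (vscale t x) y = t * dot x y.
Proof. rewrite /dot -sum_scal; apply: eq_bigr => i _; rewrite /vscale; ring. Qed.

Lemma dot_subl n (x y z : vec n) : dot (vsub x y) z = dot x z - dot y z.
Proof.
have -> : vsub x y = vadd x (vscale (-1) y).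
  by apply: functional_extensionality => i; rewrite /vsub /vadd /vscale; ring.
rewrite dot_addl dot_scalel; ring.
Qed.

Lemma dot_addr n (x y z : vec n) : dot z (vadd x y) = dot z x + dot z y.
Proof. by rewrite dot_comm dot_addl !(@dot_comm _ z). Qed.
Lemma dot_scaler n t (x y : vec n) : dot y (vscale t x) = t * dot y x.
Proof. by rewrite dot_comm dot_scalel (@dot_comm _ y). Qed.
Lemma dot_subr n (x y z : vec n) : dot z (vsub x y) = dot z x - dot z y.
Proof. by rewrite dot_comm dot_subl !(@dot_comm _ z). Qed.

Lemma dot_zerol n (y : vec n) : dot vzero y = 0.
Proof.
have -> : (vzero : vec n) = vscale 0 y.
  by apply: functional_extensionality => i; rewrite /vzero /vscale; ring.
rewrite dot_scalel; ring.
Qed.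

Lemma dot_self_nonneg n (x : vec n) : 0 <= dot x x.
Proof. apply: sum_nonneg => i; nra. Qed.

Lemma dot_self_eq0 n (x : vec n) : dot x x = 0 -> x = vzero.
Proof.
move=> H; apply: functional_extensionality => i.
have := @sum_eq0 n (fun i => x i * x i) (fun i => ltac:(nra)) H i.
rewrite /vzero /=; nra.
Qed.

Lemma vnorm_sq n (x : vec n) : vnorm x * vnorm x = dot x x.
Proof. rewrite /vnorm sqrt_sqrt //; exact: dot_self_nonneg. Qed.

Lemma vnorm_nonneg n (x : vec n) : 0 <= vnorm x.
Proof. exact: sqrt_pos. Qed.

Lemma vnorm_pos n (x : vec n) : x <> vzero -> 0 < vnorm x.
Proof.
move=> H; have := vnorm_nonneg x; case/Rle_lt_or_eq_dec => // E.
exfalso; apply: H; apply: dot_self_eq0; rewrite -vnorm_sq -E; ring.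
Qed.

Lemma vnorm_scale n t (x : vec n) : vnorm (vscale t x) = Rabs t * vnorm x.
Proof.
rewrite /vnorm dot_scalel dot_scaler -Rmult_assoc sqrt_mult_alt.
- by rewrite sqrt_Rsqr_abs.
- nra.
Qed.

Lemma dot_sub_sq n (a b : vec n) :
  dot (vsub a b) (vsub a b) = dot a a - 2 * dot a b + dot b b.
Proof. rewrite !dot_subl !dot_subr (@dot_comm _ b a); ring. Qed.

Lemma Rabs_le_both a e : Rabs a <= e -> - e <= a <= e.
Proof. move=> H; have := Rle_abs a; have := Rle_abs (- a); rewrite Rabs_Ropp; lra. Qed.

Lemma lt_div_mul s e M : 0 < M -> s < e / M -> s * M < e.
Proof.
move=> HM H; apply (Rmult_lt_compat_r M) in H; last lra.
by replace (e / M * M) with e in H by (field; lra).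
Qed.

Lemma dirB n (f : vec n -> R) x g h : has_gradient f x g ->
  forall eps, 0 < eps -> exists r, 0 < r /\ forall s, 0 < s < r ->
  f x + s * dot g h - eps * s <= f (vadd x (vscale s h)) <= f x + s * dot g h + eps * s.
Proof.
move=> Hg eps He.
set M := vnorm h + 1.
have HM : 0 < M by have := vnorm_nonneg h; rewrite /M; lra.
have HeM : 0 < eps / M by apply: Rdiv_lt_0_compat.
case: (Hg (eps / M) HeM) => d [Hd Hb].
exists (d / M); split; first by apply: Rdiv_lt_0_compat.
move=> s [s0 s1].
have Hn : vnorm (vscale s h) = s * vnorm h by rewrite vnorm_scale Rabs_pos_eq; lra.
have sM := lt_div_mul HM s1.
have hM : vnorm h <= M by rewrite /M; lra.
have Hlt : vnorm (vscale s h) < d by rewrite Hn; nra.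
have := @Rabs_le_both _ _ (Hb _ Hlt).
rewrite dot_scaler Hn.
have kM : eps / M * M = eps by field; lra.
have : eps / M * (s * vnorm h) <= eps * s.
  rewrite -{2}kM.
  have := Rmult_le_pos (eps / M * s) (M - vnorm h) ltac:(nra) ltac:(lra).
  nra.
lra.
Qed.

Lemma dirA n (f : vec n -> R) x g h : has_gradient f x g ->
  (forall eps, 0 < eps -> exists r, 0 < r /\ forall s, 0 < s < r ->
     f (vadd x (vscale s h)) <= f x + eps * s) -> dot g h <= 0.
Proof.
move=> Hg H; apply: Rnot_lt_le => Hp.
set q := dot g h in Hp.
have Hq4 : 0 < q / 4 by lra.
case: (@dirB _ _ _ _ h Hg _ Hq4) => r1 [Hr1 H1].
case: (H (q / 4) Hq4) => r2 [Hr2 H2].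
set s := Rmin r1 r2 / 2.
have Hm := Rmin_pos _ _ Hr1 Hr2.
have := Rmin_l r1 r2; have := Rmin_r r1 r2 => m2 m1.
have s0 : 0 < s by rewrite /s; lra.
have A := H1 s ltac:(rewrite /s; lra).
have B := H2 s ltac:(rewrite /s; lra).
rewrite -/q in A.
nra.
Qed.

Lemma dirA' n (f : vec n -> R) x g h r0 : has_gradient f x g -> 0 < r0 ->
  (forall s, 0 < s < r0 -> f x <= f (vadd x (vscale s h))) -> 0 <= dot g h.
Proof.
move=> Hg Hr0 H; apply: Rnot_lt_le => Hp.
set q := dot g h in Hp.
have Hq4 : 0 < - q / 2 by lra.
case: (@dirB _ _ _ _ h Hg _ Hq4) => r1 [Hr1 H1].
set s := Rmin r1 r0 / 2.
have Hm := Rmin_pos _ _ Hr1 Hr0.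
have := Rmin_l r1 r0; have := Rmin_r r1 r0 => m2 m1.
have s0 : 0 < s by rewrite /s; lra.
have A := H1 s ltac:(rewrite /s; lra).
have B := H s ltac:(rewrite /s; lra).
rewrite -/q in A.
nra.
Qed.

Lemma open_dir n (G : vec n -> Prop) x h : is_open G -> G x ->
  exists r, 0 < r /\ forall s, 0 <= s < r -> G (vadd x (vscale s h)).
Proof.
move=> HG Hx; case: (HG x Hx) => e [He Hb].
set M := vnorm h + 1.
have HM : 0 < M by have := vnorm_nonneg h; rewrite /M; lra.
exists (e / M); split; first by apply: Rdiv_lt_0_compat.
move=> s [s0 s1]; apply: Hb.
have -> : vsub (vadd x (vscale s h)) x = vscale s h.
  by apply: functional_extensionality => i; rewrite /vsub /vadd /vscale; ring.
rewrite vnorm_scale Rabs_pos_eq //.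
have sM := lt_div_mul HM s1.
have hM : vnorm h <= M by rewrite /M; lra.
nra.
Qed.

Lemma argmin_eq n (S : vec n -> Prop) f x y :
  argmin_on S f x -> argmin_on S f y -> f x = f y.
Proof. move=> [Sx Hx] [Sy Hy]; have := Hx y Sy; have := Hy x Sx; lra. Qed.

Lemma seg_const n (G S : vec n -> Prop) f x y t :
  (forall z, S z -> G z) -> is_convex S -> quasiconvex_on G f ->
  argmin_on S f x -> argmin_on S f y -> 0 <= t <= 1 ->
  S (vadd x (vscale t (vsub y x))) /\ f (vadd x (vscale t (vsub y x))) = f x.
Proof.
move=> Hsub Hc Hq Ax Ay Ht.
have Exy := argmin_eq Ax Ay.
case: Ax Ay => [Sx Hx] [Sy Hy].
have Sz := Hc _ _ _ Sx Sy Ht; split => //.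
have := Hq _ _ _ (Hsub _ Sx) (Hsub _ Sy) Ht.
rewrite -Exy Rmax_left; last lra.
have := Hx _ Sz; lra.
Qed.

Lemma Plem n (G S : vec n -> Prop) f grad (hGopen : is_open G)
  (hSsub : forall z, S z -> G z) (hSconv : is_convex S)
  (hg : forall z, G z -> has_gradient f z (grad z)) (hqc : quasiconvex_on G f) x y h :
  argmin_on S f x -> argmin_on S f y -> dot (grad x) h < 0 -> dot (grad y) h <= 0.
Proof.
move=> Ax Ay Hh.
have Exy := argmin_eq Ax Ay.
have [Sx Hx] := Ax; have [Sy Hy] := Ay.
have Gx := hSsub _ Sx; have Gy := hSsub _ Sy.
have S1 : 0 <= dot (grad y) (vsub x y).
  apply: (@dirA' _ f y _ (vsub x y) 1 (hg _ Gy)); first lra.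
  move=> s Hs; apply: Hy; apply: hSconv => //; lra.
apply: Rnot_lt_le => Hp.
have He : 0 < - dot (grad x) h / 2 by lra.
case: (@dirB _ _ _ _ h (hg _ Gx) _ He) => r1 [Hr1 H1].
case: (@open_dir _ _ x h hGopen Gx) => r2 [Hr2 H2].
set s0 := Rmin r1 r2 / 2.
have Hm := Rmin_pos _ _ Hr1 Hr2.
have := Rmin_l r1 r2; have := Rmin_r r1 r2 => m2 m1.
have s0p : 0 < s0 by rewrite /s0; lra.
set z := vadd x (vscale s0 h).
have Gz : G z by apply: H2; rewrite /s0; lra.
have fz : f z <= f x.
  have := H1 s0 ltac:(rewrite /s0; lra); rewrite -/z; nra.
have Hd : dot (grad y) (vsub z y) <= 0.
  apply: (@dirA _ f y _ (vsub z y) (hg _ Gy)) => eps Heps.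
  exists 1; split; first lra.
  move=> s Hs; have := hqc _ _ s Gy Gz ltac:(lra).
  move=> Hq; rewrite Rmax_left in Hq; nra.
have E : vsub z y = vadd (vsub x y) (vscale s0 h).
  by apply: functional_extensionality => i; rewrite /z /vsub /vadd /vscale; ring.
rewrite E dot_addr dot_scaler in Hd.
nra.
Qed.

Lemma Qlem n (G S : vec n -> Prop) f grad (hGopen : is_open G)
  (hSsub : forall z, S z -> G z) (hSconv : is_convex S)
  (hg : forall z, G z -> has_gradient f z (grad z)) (hcont : continuous_on_vec G grad)
  (hqc : quasiconvex_on G f) x y :
  argmin_on S f x -> argmin_on S f y -> grad y = vzero -> grad x = vzero.
Proof.
move=> Ax Ay Hy0; apply: NNPP => Hx0.
have [Sx _] := Ax; have [Sy _] := Ay.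
have Gx := hSsub _ Sx; have Gy := hSsub _ Sy.
set gx := grad x in Hx0 *.
have Key : forall l, 0 < l <= 1 ->
    dot (grad (vadd x (vscale l (vsub y x)))) gx <= 0.
  move=> l Hl.
  have [Sz fz] := @seg_const _ _ _ f x y l hSsub hSconv hqc Ax Ay ltac:(lra).
  set z := vadd x (vscale l (vsub y x)) in Sz fz *.
  apply: (@dirA _ f z _ gx (hg _ (hSsub _ Sz))) => eps Heps.
  have Hel : 0 < eps * l by nra.
  case: (@dirB _ f y (grad y) gx (hg _ Gy) _ Hel) => r1 [Hr1 H1].
  case: (@open_dir _ _ y gx hGopen Gy) => r2 [Hr2 H2].
  have Hm := Rmin_pos _ _ Hr1 Hr2.
  have := Rmin_l r1 r2; have := Rmin_r r1 r2 => m2 m1.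
  exists (l * Rmin r1 r2); split; first nra.
  move=> s Hs.
  set t := s / l.
  have tl : t * l = s by rewrite /t; field; lra.
  have tp : 0 < t < Rmin r1 r2 by nra.
  set p := vadd y (vscale t gx).
  have Gp : G p by apply: H2; lra.
  have fp : f p <= f y + eps * s.
    have := H1 t ltac:(lra); rewrite Hy0 dot_zerol -/p; nra.
  have E : vadd z (vscale s gx) = vadd x (vscale l (vsub p x)).
    apply: functional_extensionality => i; rewrite /z /p /vsub /vadd /vscale.
    rewrite -tl; ring.
  rewrite E fz.
  have := hqc x p l Gx Gp ltac:(lra).
  have := argmin_eq Ax Ay => Exy.
  move=> Hq; apply: (Rle_trans _ _ _ Hq); apply: Rmax_lub; nra.
have Hnx : 0 < vnorm gx := vnorm_pos Hx0.
case: (hcont x Gx (vnorm gx) Hnx) => d [Hd Hc].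
set D := vnorm (vsub y x) + 1.
have HD : 0 < D by have := vnorm_nonneg (vsub y x); rewrite /D; lra.
have HdD : 0 < d / D by apply: Rdiv_lt_0_compat.
set l := Rmin 1 (d / D).
have l0 : 0 < l by apply: Rmin_pos; lra.
have l1 : l <= 1 by apply: Rmin_l.
have l2 : l <= d / D by apply: Rmin_r.
have [Sz _] := @seg_const _ _ _ f x y l hSsub hSconv hqc Ax Ay ltac:(lra).
have Hdist : vnorm (vsub (vadd x (vscale l (vsub y x))) x) < d.
  have -> : vsub (vadd x (vscale l (vsub y x))) x = vscale l (vsub y x).
    by apply: functional_extensionality => i; rewrite /vsub /vadd /vscale; ring.
  rewrite vnorm_scale Rabs_pos_eq; last lra.
  have lD : l * D <= d by have := Rmult_le_compat_r D _ _ (Rlt_le _ _ HD) l2; replace (d / D * D) with d by (field; lra).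
  rewrite /D in lD; nra.
have Hcl : vnorm (vsub (grad (vadd x (vscale l (vsub y x)))) gx) < vnorm gx := Hc _ (hSsub _ Sz) Hdist.
have K := Key l ltac:(lra).
set gz := grad (vadd x (vscale l (vsub y x))) in Hcl K.
have n1 := vnorm_nonneg (vsub gz gx).
have Hsq : dot (vsub gz gx) (vsub gz gx) < dot gx gx.
  rewrite -(vnorm_sq (vsub gz gx)) -(vnorm_sq gx); nra.
rewrite dot_sub_sq in Hsq.
have := dot_self_nonneg gz.
lra.
Qed.

Lemma normeq n (a b : vec n) : a <> vzero -> b <> vzero ->
  (forall h, dot a h < 0 -> dot b h <= 0) ->
  vscale (/ vnorm a) a = vscale (/ vnorm b) b.
Proof.
move=> Ha Hb H.
have na := vnorm_pos Ha; have nb := vnorm_pos Hb.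
have sa := vnorm_sq a; have sb := vnorm_sq b.
set u := vscale (/ vnorm a) a; set w := vscale (/ vnorm b) b.
set p := dot u w.
have uu : dot u u = 1 by rewrite /u dot_scalel dot_scaler -sa; field; lra.
have ww : dot w w = 1 by rewrite /w dot_scalel dot_scaler -sb; field; lra.
have au : dot a u = vnorm a by rewrite /u dot_scaler -sa; field; lra.
have bw : dot b w = vnorm b by rewrite /w dot_scaler -sb; field; lra.
have aw : dot a w = vnorm a * p.
  by rewrite /p /u /w dot_scalel !dot_scaler; field; lra.
have bu : dot b u = vnorm b * p.
  by rewrite /p /u /w dot_scalel !dot_scaler (@dot_comm _ b a); field; lra.
have Hp : 1 <= p.
  apply: Rnot_lt_le => Hp1.
  have := H (vsub w u); rewrite !dot_subr aw au bw bu.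
  move=> Himp; have := Himp ltac:(nra); nra.
have Z : dot (vsub w u) (vsub w u) = 0.
  rewrite dot_sub_sq ww uu (@dot_comm _ w u) -/p.
  have := dot_self_nonneg (vsub w u); rewrite dot_sub_sq ww uu (@dot_comm _ w u) -/p.
  lra.
have E := dot_self_eq0 Z.
apply: functional_extensionality => i; have := equal_f E i.
rewrite /vsub /vzero; lra.
Qed.

Theorem lemma6 (n : nat) (Gamma S : vec n -> Prop) (f : vec n -> R) (grad : vec n -> vec n)
  (hGopen : is_open Gamma) (hGconv : is_convex Gamma)
  (hSsub : forall x, S x -> Gamma x) (hSne : exists x, S x) (hSconv : is_convex S)
  (hf : C1_on_with_grad Gamma f grad) (hqc : quasiconvex_on Gamma f)
  (hSbar : exists x, argmin_on S f x) :
  let I := (forall x, argmin_on S f x -> grad x <> vzero) /\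
           (forall x y, argmin_on S f x -> argmin_on S f y ->
              vscale (/ vnorm (grad x)) (grad x) = vscale (/ vnorm (grad y)) (grad y)) in
  let II := forall x, argmin_on S f x -> grad x = vzero in
  (I /\ ~ II) \/ (~ I /\ II).
Proof.
move=> I II.
have [x0 Ax0] := hSbar.
case: hf => hg hcont.
case: (classic (grad x0 = vzero)) => H0.
- right; split.
  + by move=> [HI _]; exact: HI x0 Ax0 H0.
  + move=> y Ay; exact: (Qlem hGopen hSsub hSconv hg hcont hqc Ay Ax0 H0).
- have Hall : forall y, argmin_on S f y -> grad y <> vzero.
    move=> y Ay Hy; apply: H0; exact: (Qlem hGopen hSsub hSconv hg hcont hqc Ax0 Ay Hy).
  left; split.
  + split; first exact: Hall.
    move=> x y Ax Ay; apply: normeq; [exact: Hall|exact: Hall|].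
    move=> h Hh; exact: (@Plem n Gamma S f grad hGopen hSsub hSconv hg hqc x y h Ax Ay Hh).
  + by move=> HII; apply: H0; exact: HII x0 Ax0.
Qed.
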